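(* Let $\mathcal G=(\mathcal V,\mathcal E)$ be a weakly connected digraph without self-loops with node set partitioned as $\mathcal V=\mathcal M\cup\mathcal P$ (nodes in $\mathcal M$: DGUs and loads; nodes in $\mathcal P$: power lines), such that every edge has exactly one endpoint in $\mathcal M$ and one in $\mathcal P$, and each line $l\in\mathcal P$ has exactly one in-neighbour $a\in\mathcal M$ and exactly one out-neighbour $b\in\mathcal M$. To each node $k\in\mathcal M$ associate a voltage $V_k\in\mathbb R^2$, interaction output $z_k=V_k$ and interaction input \[ d_k=-\sum_{l\in\mathcal N_k^+}I_l+\sum_{l\in\mathcal N_k^-}I_l , \] and to each line $l\in\mathcal P$ (from $a$ to $b$) associate a current $I_l\in\mathbb R^2$, interaction output $z_l=[I_l^\top,-I_l^\top]^\top\in\mathbb R^4$ and interaction input $d_l=[V_a^\top,V_b^\top]^\top$. Then this interconnection is skew-symmetric: there exist matrices $\phi_{vw}$ of appropriate dimensions such that for every $v\in\mathcal V$, \[ d_v=\sum_{w\in\mathcal N_v}\phi_{vw}z_w=\sum_{w\in\mathcal N^+_v}\phi_{vw}z_w-\sum_{w\in\mathcal N^-_v}\phi_{wv}^\top z_w , \] i.e. $\phi_{vw}=-\phi_{wv}^\top$ for all neighbouring $v,w$, so that the stacked relation $d=\Phi z$ has $\Phi=-\Phi^\top$.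
   Context: For a node $v$ of a digraph, $\mathcal N_v^+=\{w:(v,w)\in\mathcal E\}$ denotes the out-neighbours, $\mathcal N_v^-=\{w:(w,v)\in\mathcal E\}$ the in-neighbours and $\mathcal N_v=\mathcal N_v^+\cup\mathcal N_v^-$. The edge orientation gives the reference direction of the positive line current. All electrical vectors are dq components. *)

(* Defs.v *)
From HB Require Import structures.
From mathcomp Require Import all_boot all_order all_algebra.
Set Implicit Arguments. Unset Strict Implicit. Unset Printing Implicit Defensive.
Import Order.TTheory GRing.Theory Num.Theory.
Local Open Scope ring_scope.

Section Microgrid.
Variables (R : realFieldType) (T : finType) (E : rel T) (M : {set T}).

Definition weakly_connected : Prop :=
  forall x y : T, connect (fun a b => E a b || E b a) x y.

Definition nbhd (v : T) : {set T} := [set w | E v w || E w v].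

Definition ndim (v : T) : nat := if v \in M then 2%N else 4%N.

Variables (Vol : T -> 'cV[R]_2) (Cur : T -> 'cV[R]_2).

Definition V_in (l : T) : 'cV[R]_2 := oapp Vol 0 [pick a | E a l].
Definition V_out (l : T) : 'cV[R]_2 := oapp Vol 0 [pick b | E l b].

Definition zout (v : T) : 'cV[R]_(ndim v) :=
  match v \in M as b return 'cV[R]_(if b then 2%N else 4%N) with
  | true => Vol v
  | false => col_mx (Cur v) (- Cur v)
  end.

Definition din (v : T) : 'cV[R]_(ndim v) :=
  match v \in M as b return 'cV[R]_(if b then 2%N else 4%N) with
  | true => - (\sum_(l | E v l) Cur l) + \sum_(l | E l v) Cur l
  | false => col_mx (V_in v) (V_out v)
  end.

End Microgrid.

(* Main.v *)
Require Import Defs.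
From HB Require Import structures.
From mathcomp Require Import all_boot all_order all_algebra.
Import Order.TTheory GRing.Theory Num.Theory.
Local Open Scope ring_scope.

Lemma sum_col_mx_h (R : realFieldType) (I : Type) (r : seq I) (P : pred I) m1 m2 n
  (A : I -> 'M[R]_(m1, n)) (B : I -> 'M[R]_(m2, n)) :
  \sum_(i <- r | P i) col_mx (A i) (B i) =
  col_mx (\sum_(i <- r | P i) A i) (\sum_(i <- r | P i) B i).
Proof.
elim/big_rec3: _ => [|i x y z _ ->]; first by rewrite col_mx0.
by rewrite add_col_mx.
Qed.

Section S.
Variables (R : realFieldType) (T : finType) (E : rel T) (M : {set T}).

Definition blk (bv bw : bool) (v w : T) :
  'M[R]_(if bv then 2%N else (2+2)%N, if bw then 2%N else (2+2)%N) :=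
  match bv as b1, bw as b2 return
    'M[R]_(if b1 then 2%N else (2+2)%N, if b2 then 2%N else (2+2)%N) with
  | true, false => row_mx (- ((E v w)%:R)%:M : 'M[R]_2) (- ((E w v)%:R)%:M : 'M[R]_2)
  | false, true => col_mx (((E w v)%:R)%:M : 'M[R]_2) (((E v w)%:R)%:M : 'M[R]_2)
  | _, _ => 0
  end.

Lemma blk_skew bv bw v w : blk bv bw v w = - (blk bw bv w v)^T.
Proof.
case: bv; case: bw => /=; rewrite ?trmx0 ?oppr0 //.
  by rewrite tr_col_mx !(@tr_scalar_mx R) opp_row_mx.
by rewrite tr_row_mx !linearN /= !(@tr_scalar_mx R) opp_col_mx !opprK.
Qed.

Lemma blk0 bv bw v w : ~~ (E v w || E w v) -> blk bv bw v w = 0.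
Proof.
case/norP => /negbTE H1 /negbTE H2.
case: bv; case: bw => //=; rewrite H1 H2 /= !raddf0 ?oppr0 ?row_mx0 ?col_mx0 //.
Qed.


Lemma sum_nbhd_out (v : T) n (f : T -> 'cV[R]_n) :
  \sum_(w | E v w) f w = \sum_(w in nbhd E v) (E v w)%:R *: f w.
Proof.
rewrite big_mkcond [RHS]big_mkcond; apply: eq_bigr => w _; rewrite inE.
by case: (E v w); case: (E w v) => /=; rewrite ?scale1r ?scale0r.
Qed.

Lemma sum_nbhd_in (v : T) n (f : T -> 'cV[R]_n) :
  \sum_(w | E w v) f w = \sum_(w in nbhd E v) (E w v)%:R *: f w.
Proof.
rewrite big_mkcond [RHS]big_mkcond; apply: eq_bigr => w _; rewrite inE.
by case: (E v w); case: (E w v) => /=; rewrite ?scale1r ?scale0r.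
Qed.

Lemma pick_sum (P : pred T) (f : T -> 'cV[R]_2) :
  #|[set a | P a]| = 1%N -> oapp f 0 [pick a | P a] = \sum_(w | P w) f w.
Proof.
move/eqP/cards1P=> [a Ha].
have HP : forall x, P x = (x == a).
  by move=> x; have := congr1 (fun S : {set T} => x \in S) Ha; rewrite !inE.
rewrite (eq_bigl (pred1 a)) ?big_pred1_eq; last by move=> x; rewrite /= HP.
case: pickP => [x Hx|H] /=; first by move: Hx; rewrite HP => /eqP->.
by move: (H a); rewrite HP eqxx.
Qed.

Variables (Vol Cur : T -> 'cV[R]_2).

Definition zgen (b : bool) (w : T) : 'cV[R]_(if b then 2%N else (2+2)%N) :=
  match b as b0 return 'cV[R]_(if b0 then 2%N else (2+2)%N) with
  | true => Vol w
  | false => col_mx (Cur w) (- Cur w)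
  end.

Definition Fgen (bv : bool) (v w : T) : 'cV[R]_(if bv then 2%N else (2+2)%N) :=
  match bv as b0 return 'cV[R]_(if b0 then 2%N else (2+2)%N) with
  | true => (E w v)%:R *: Cur w - (E v w)%:R *: Cur w
  | false => col_mx ((E w v)%:R *: Vol w) ((E v w)%:R *: Vol w)
  end.

Definition dgen (bv : bool) (v : T) : 'cV[R]_(if bv then 2%N else (2+2)%N) :=
  match bv as b0 return 'cV[R]_(if b0 then 2%N else (2+2)%N) with
  | true => - (\sum_(l | E v l) Cur l) + \sum_(l | E l v) Cur l
  | false => col_mx (V_in E Vol v) (V_out E Vol v)
  end.

Lemma term bv bw v w : bw = ~~ bv -> blk bv bw v w *m zgen bw w = Fgen bv v w.
Proof.
move=> ->; case: bv => /=.
  rewrite mul_row_col !mulNmx !mul_scalar_mx scalerN opprK addrC.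
  by rewrite addrC.
by rewrite mul_col_mx !mul_scalar_mx.
Qed.


Lemma key (bipartite : forall v w : T, E v w -> (v \in M) != (w \in M))
  (lines : forall l : T, l \notin M ->
      #|[set a | E a l]| = 1%N /\ #|[set b | E l b]| = 1%N)
  v bv : (v \in M) = bv ->
  dgen bv v = \sum_(w in nbhd E v) blk bv (w \in M) v w *m zgen (w \in M) w.
Proof.
move=> Hv.
rewrite (eq_bigr (fun w => Fgen bv v w)); last first.
  move=> w; rewrite inE => Hw; apply: term.
  have: (v \in M) != (w \in M).
    by case/orP: Hw => H; [exact: bipartite | rewrite eq_sym; exact: bipartite].
  by rewrite Hv; case: bv {Hv}; case: (w \in M).
case: bv Hv => Hv /=.
  rewrite sum_nbhd_out sum_nbhd_in big_split /= sumrN addrC.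
  done.
have [H1 H2] := lines v (negbT Hv).
rewrite sum_col_mx_h /V_in /V_out (pick_sum _ _ H1) (pick_sum _ _ H2).
by rewrite sum_nbhd_out sum_nbhd_in.
Qed.

End S.

Theorem lemma3 (R : realFieldType) (T : finType) (E : rel T) (M : {set T})
  (no_loop : forall v : T, ~~ E v v)
  (bipartite : forall v w : T, E v w -> (v \in M) != (w \in M))
  (lines : forall l : T, l \notin M ->
      #|[set a | E a l]| = 1%N /\ #|[set b | E l b]| = 1%N)
  (wconn : weakly_connected E) :
  exists phi : forall v w : T, 'M[R]_(ndim M v, ndim M w),
    (forall v w : T, phi v w = - (phi w v)^T) /\
    (forall v w : T, w \notin nbhd E v -> phi v w = 0) /\
    (forall (Vol Cur : T -> 'cV[R]_2) (v : T),
        din E M Vol Cur v = \sum_(w in nbhd E v) phi v w *m zout M Vol Cur w).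
Proof.
exists (fun v w => @blk R T E (v \in M) (w \in M) v w).
split; first by move=> v w; exact: blk_skew.
split; first by move=> v w; rewrite inE => H; exact: blk0.
move=> Vol Cur v.
exact: (@key R T E M Vol Cur bipartite lines v _ (erefl (v \in M))).
Qed.
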